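(* Let $F:\mathcal{P}(V,A)\to S_2(A)$ be a consular election rule satisfying SPP and SPO. Then $F$ is reducible if and only if its range graph $\mathcal{G}(F)$ is bipartite.
   Context: $V$ is a finite nonempty set of voters, $A$ a finite set of alternatives; a profile $P$ assigns to each voter $i$ a linear order $P_i$ on $A$; $P_i'P_{-i}$ replaces voter $i$'s order by $P_i'$; $P|_B$ is the profile of restrictions to $B\subseteq A$. $S_2(A)$ is the set of 2-element subsets of $A$; a consular election rule is a map $F:\mathcal{P}(V,A)\to S_2(A)$. SPO: for all $P$, $i$, $P_i'$, $\mathrm{best}(P_i,F(P))\succeq_i\mathrm{best}(P_i,F(P_i'P_{-i}))$; SPP: same with $\mathrm{worst}$, where $\mathrm{best}(P_i,W)$, $\mathrm{worst}(P_i,W)$ are the $P_i$-best and $P_i$-worst elements of $W$. $F$ is reducible if there is a partition $A=B\uplus C$ and social choice functions $G:\mathcal{P}(V,B)\to B$, $H:\mathcal{P}(V,C)\to C$ with $F(P)=\{G(P|_B),H(P|_C)\}$ for all $P$. The range graph $\mathcal{G}(F)$ has vertex set $A$ and edge set equal to the range of $F$. *)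

(* Defs.v *)
From mathcomp Require Import all_boot.
Set Implicit Arguments. Unset Strict Implicit. Unset Printing Implicit Defensive.

(* A (strict) linear order on T: [lo x y] means "x is ranked strictly above y"
   (x is preferred to y). *)
Record linord (T : eqType) := LinOrd {
  lo :> rel T;
  lo_irr : forall x, ~~ lo x x;
  lo_trans : forall x y z, lo x y -> lo y z -> lo x z;
  lo_total : forall x y, x != y -> lo x y || lo y x
}.

Definition weakpref (T : eqType) (R : linord T) (x y : T) : Prop := x = y \/ R x y.

Definition profile (V : finType) (T : eqType) := V -> linord T.

Definition update (V : finType) (T : eqType) (P : profile V T) (i : V) (Pi' : linord T)
  : profile V T := fun j => if j == i then Pi' else P j.

Section Restrict.
Variables (A : finType) (B : {set A}).
Definition sub_of := {x : A | x \in B}.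
Definition restr_rel (R : linord A) : rel sub_of := fun x y => R (val x) (val y).
Lemma restr_irr R x : ~~ restr_rel R x x.
Proof. exact: lo_irr. Qed.
Lemma restr_trans R x y z : restr_rel R x y -> restr_rel R y z -> restr_rel R x z.
Proof. exact: lo_trans. Qed.
Lemma restr_total R x y : x != y -> restr_rel R x y || restr_rel R y x.
Proof. by move=> hxy; apply: lo_total; rewrite (inj_eq val_inj). Qed.
Definition restr_lo (R : linord A) : linord sub_of :=
  LinOrd (@restr_irr R) (@restr_trans R) (@restr_total R).
End Restrict.

Definition restr_profile (V A : finType) (P : profile V A) (B : {set A})
  : profile V (sub_of B) := fun i => restr_lo B (P i).

Definition is_best (A : finType) (R : linord A) (W : {set A}) (x : A) : Prop :=
  x \in W /\ forall y, y \in W -> y != x -> R x y.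
Definition is_worst (A : finType) (R : linord A) (W : {set A}) (x : A) : Prop :=
  x \in W /\ forall y, y \in W -> y != x -> R y x.

Definition consular (V A : finType) (F : profile V A -> {set A}) : Prop :=
  forall P, #|F P| = 2.

Definition SPO (V A : finType) (F : profile V A -> {set A}) : Prop :=
  forall P i Pi' x y, is_best (P i) (F P) x -> is_best (P i) (F (update P i Pi')) y ->
    weakpref (P i) x y.

Definition SPP (V A : finType) (F : profile V A -> {set A}) : Prop :=
  forall P i Pi' x y, is_worst (P i) (F P) x -> is_worst (P i) (F (update P i Pi')) y ->
    weakpref (P i) x y.

Definition reducible (V A : finType) (F : profile V A -> {set A}) : Prop :=
  exists (B C : {set A}), [/\ B :|: C = [set: A], [disjoint B & C] &
    exists (G : profile V (sub_of B) -> sub_of B) (H : profile V (sub_of C) -> sub_of C),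
      forall P, F P = [set val (G (restr_profile P B)); val (H (restr_profile P C))]].

Definition range_edge (V A : finType) (F : profile V A -> {set A}) (W : {set A}) : Prop :=
  exists P, F P = W.

Definition bipartite (A : finType) (E : {set A} -> Prop) : Prop :=
  exists c : A -> bool, forall W, E W ->
    forall x y, x \in W -> y \in W -> x != y -> c x != c y.

Definition range_graph_bipartite (V A : finType) (F : profile V A -> {set A}) : Prop :=
  bipartite (range_edge F).

(* Main.v *)
Require Import Defs.
From mathcomp Require Import all_boot.
From Stdlib Require Import ClassicalEpsilon FunctionalExtensionality.

Set Implicit Arguments. Unset Strict Implicit. Unset Printing Implicit Defensive.

Lemma card2E (A : finType) (W : {set A}) :
  #|W| = 2 -> exists x y, x != y /\ W = [set x; y].
Proof. by move=> h; apply/cards2P; rewrite h. Qed.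

Lemma exists_best (A : finType) (R : linord A) (W : {set A}) :
  #|W| = 2 -> exists x, is_best R W x.
Proof.
case/card2E=> [x [y [nxy ->]]].
case/orP: (lo_total R nxy) => h.
- exists x; split; first by rewrite !inE eqxx.
  by move=> z; rewrite !inE => /orP[/eqP->|/eqP->]; rewrite ?eqxx.
- exists y; split; first by rewrite !inE eqxx orbT.
  by move=> z; rewrite !inE => /orP[/eqP->|/eqP->]; rewrite ?eqxx.
Qed.

Lemma exists_worst (A : finType) (R : linord A) (W : {set A}) :
  #|W| = 2 -> exists x, is_worst R W x.
Proof.
case/card2E=> [x [y [nxy ->]]].
case/orP: (lo_total R nxy) => h.
- exists y; split; first by rewrite !inE eqxx orbT.
  by move=> z; rewrite !inE => /orP[/eqP->|/eqP->]; rewrite ?eqxx.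
- exists x; split; first by rewrite !inE eqxx.
  by move=> z; rewrite !inE => /orP[/eqP->|/eqP->]; rewrite ?eqxx.
Qed.

Lemma wp_trans (A : eqType) (R : linord A) x y z :
  weakpref R x y -> weakpref R y z -> weakpref R x z.
Proof.
case=> [->//|h1]; case=> [<-|h2]; first by right.
right; exact: lo_trans h1 h2.
Qed.

Lemma other (A : finType) (W : {set A}) x : #|W| = 2 -> x \in W ->
  exists y, [/\ y \in W, y != x & forall z, z \in W -> z = x \/ z = y].
Proof.
case/card2E=> [u [v [nuv ->]]]; rewrite !inE => /orP[]/eqP->.
- exists v; split; first by rewrite !inE eqxx orbT.
  + by rewrite eq_sym.
  + by move=> z; rewrite !inE => /orP[]/eqP->; auto.
- exists u; split; first by rewrite !inE eqxx.
  + by [].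
  + by move=> z; rewrite !inE => /orP[]/eqP->; auto.
Qed.

Lemma set2_eq (A : finType) (W : {set A}) x y : #|W| = 2 -> x \in W -> y \in W ->
  x != y -> W = [set x; y].
Proof.
move=> h hx hy nxy; apply/eqP; rewrite eq_sym eqEcard cards2 nxy h andbT.
by apply/subsetP => z; rewrite !inE => /orP[]/eqP->.
Qed.

Definition rank_rel (A : eqType) (s : seq A) : rel A :=
  fun x y => index x s < index y s.

Section Rank.
Variables (A : eqType) (s : seq A).
Hypothesis hs : forall x, x \in s.
Lemma rank_irr x : ~~ rank_rel s x x.
Proof. by rewrite /rank_rel ltnn. Qed.
Lemma rank_trans x y z : rank_rel s x y -> rank_rel s y z -> rank_rel s x z.
Proof. exact: ltn_trans. Qed.
Lemma rank_total x y : x != y -> rank_rel s x y || rank_rel s y x.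
Proof.
move=> nxy; rewrite /rank_rel.
case: (ltngtP (index x s) (index y s)) => // e.
by move: nxy; rewrite -(nth_index x (hs x)) -(nth_index x (hs y)) e eqxx.
Qed.
Definition rank_lo : linord A := @LinOrd A (rank_rel s) rank_irr rank_trans rank_total.
End Rank.

Lemma update_id (V : finType) (T : eqType) (P : profile V T) i : update P i (P i) = P.
Proof.
by apply: functional_extensionality => j; rewrite /update; case: eqP => // ->.
Qed.

Lemma update_update (V : finType) (T : eqType) (P : profile V T) i X Y :
  update (update P i X) i Y = update P i Y.
Proof. by apply: functional_extensionality => j; rewrite /update; case: eqP. Qed.

Lemma update_at (V : finType) (T : eqType) (P : profile V T) i X : update P i X i = X.
Proof. by rewrite /update eqxx. Qed.

Section Main.
Variables (V A : finType) (F : profile V A -> {set A}).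
Hypothesis Fcons : consular F.
Hypothesis Fspo : SPO F.
Hypothesis Fspp : SPP F.
Variable c : A -> bool.
Hypothesis bip : forall P x y, x \in F P -> y \in F P -> x != y -> c x != c y.

Lemma L_best P i Q u : u \in F (update P i Q) ->
  exists2 x, x \in F P & weakpref (P i) x u.
Proof.
move=> hu.
have [x0 [hx0 bx0]] := exists_best (P i) (Fcons P).
have [y0 [hy0 by0]] := exists_best (P i) (Fcons (update P i Q)).
exists x0 => //.
apply: wp_trans (Fspo (conj hx0 bx0) (conj hy0 by0)) _.
by case: (eqVneq u y0) => [->|ne]; [left | right; apply: by0].
Qed.

Lemma L_worst P i Q x : x \in F P ->
  exists2 u, u \in F (update P i Q) & weakpref (P i) x u.
Proof.
move=> hx.
have [x0 [hx0 bx0]] := exists_worst (P i) (Fcons P).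
have [y0 [hy0 by0]] := exists_worst (P i) (Fcons (update P i Q)).
exists y0 => //.
apply: wp_trans _ (Fspp (conj hx0 bx0) (conj hy0 by0)).
by case: (eqVneq x x0) => [->|ne]; [left | right; apply: bx0].
Qed.

Lemma mono k P i Q b b' : b \in F P -> c b = k -> b' \in F (update P i Q) ->
  c b' = k -> weakpref Q b' b.
Proof.
move=> hb cb hb' cb'.
case: (eqVneq b' b) => [->|nbb]; first by left.
case hQ: (Q b' b); first by right.
exfalso.
have Qbb' : Q b b' by have := lo_total Q nbb; rewrite hQ.
set P' := update P i Q.
have [c' [hc' nc' allP']] := other (Fcons P') hb'.
have cc' : c c' != k by rewrite -cb'; apply: (bip hc' hb' nc').
have nbc' : b != c' by apply/eqP => e; move: cc'; rewrite -e cb eqxx.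
set s := [:: b, b', c' & enum A].
have hs : forall x, x \in s by move=> x; rewrite !inE mem_enum !orbT.
pose Q'' := rank_lo hs.
have hz : forall z, z = nth z s (index z s) by move=> z; rewrite nth_index.
have ib : index b s = 0 by rewrite /= eqxx.
have ib' : index b' s = 1 by rewrite /= eq_sym (negbTE nbb) eqxx.
have ic' : index c' s = 2.
  by rewrite /= (negbTE nbc') eq_sym (negbTE nc') eqxx.
have lt2 : forall z, index z s < 2 -> z = b \/ z = b'.
  move=> z; move: (hz z); case: (index z s) => [|[|n]] //= -> _; auto.
pose P'' := update P i Q''.
have hbP'' : b \in F P''.
  have hbin : b \in F (update P'' i (P i)) by rewrite /P'' update_update update_id.
  have [x hx wx] := L_best hbin.
  rewrite /P'' update_at in wx.
  case: wx => [<-//|]; by rewrite /Q'' /= /rank_rel ib.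
have [z [hzP nzb allP'']] := other (Fcons P'') hbP''.
have cz : c z != k by rewrite -cb; apply: (bip hzP hbP'' nzb).
have zc' : z = c'.
  have [u hu wu] := L_worst (P := P'') i Q hzP.
  rewrite /P'' update_update -/P' in hu.
  rewrite /P'' update_at in wu.
  case: (allP' u hu) => eu; subst u.
  - case: wu => [ezb|]; first by move: cz; rewrite ezb cb' eqxx.
    rewrite /Q'' /= /rank_rel ib'.
    move=> h; case: (lt2 z (ltn_trans h (ltnSn 1))) => e.
    + by move: nzb; rewrite e eqxx.
    + by move: cz; rewrite e cb' eqxx.
  - case: wu => [//|]; rewrite /Q'' /= /rank_rel ic' => h.
    case: (lt2 z h) => e.
    + by move: nzb; rewrite e eqxx.
    + by move: cz; rewrite e cb' eqxx.
have Qc'b : Q c' b.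
  have hbin : b \in F (update P' i Q'') by rewrite /P' update_update.
  have [x hx wx] := L_best hbin.
  rewrite /P' update_at in wx.
  case: (allP' x hx) => ex; subst x.
  + by case: wx => [e|]; [move: nbb; rewrite e eqxx | rewrite hQ].
  + by case: wx => [e|//]; move: nbc'; rewrite e eqxx.
have [u hu wu] := L_worst (P := P') i Q'' hb'.
rewrite /P' update_update -/P'' in hu.
rewrite /P' update_at in wu.
case: (allP'' u hu) => eu; subst u.
- by case: wu => [e|]; [move: nbb; rewrite e eqxx | rewrite hQ].
- rewrite zc' in wu; case: wu => [e|h].
  + by move: nc'; rewrite e eqxx.
  + by move: hQ; rewrite (lo_trans h Qc'b).
Qed.

Lemma exists_col k P : exists2 y, y \in F P & c y = k.
Proof.
have [x [y [nxy eP]]] := card2E (Fcons P).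
have hx : x \in F P by rewrite eP !inE eqxx.
have hy : y \in F P by rewrite eP !inE eqxx orbT.
have h := bip hx hy nxy.
have [ex|nx] := eqVneq (c x) k; first by exists x.
exists y => //; move: h nx; case: (c x); case: (c y); case: k.
all: by [].
Qed.

Lemma uniq_col k P x y : x \in F P -> y \in F P -> c x = k -> c y = k -> x = y.
Proof.
move=> hx hy cx cy; case: (eqVneq x y) => // ne.
by have := bip hx hy ne; rewrite cx cy eqxx.
Qed.

Lemma propag k (s : seq V) : forall P P' : profile V A, (forall j, j \notin s -> P' j = P j) ->
  (forall j x y, c x = k -> c y = k -> P j x y = P' j x y) ->
  forall x x', x \in F P -> c x = k -> x' \in F P' -> c x' = k -> x = x'.
Proof.
elim: s => [|a s IH] P P' hd ha x x' hx cx hx' cx'.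
  have eP : P' = P by apply: functional_extensionality => j; apply: hd.
  rewrite eP in hx'; exact: (uniq_col hx hx' cx cx').
pose P1 := update P' a (P a).
have [y hy cy] := exists_col k P1.
have exy : x = y.
  apply: (IH P P1) => //.
  - move=> j hj; rewrite /P1 /update; case: eqP => [->//|/eqP nja].
    by apply: hd; rewrite inE negb_or nja hj.
  - move=> j u v cu cv; rewrite /P1 /update; case: eqP => [->//|_]; exact: ha.
have e1 : update P1 a (P' a) = P' by rewrite /P1 update_update update_id.
have w1 : weakpref (P' a) x' y.
  by apply: (mono (P := P1) (i := a) hy cy) => //; rewrite e1.
have w2 : weakpref (P a) y x' := mono hx' cx' hy cy.
rewrite exy; case: w1 => [->//|h1]; case: w2 => [//|h2].
rewrite (ha a y x' cy cx') in h2.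
by have := lo_irr (P' a) y; rewrite (lo_trans h2 h1).
Qed.

Definition Bk k := [set x | c x == k].

Lemma main_k k (d : sub_of (Bk k)) (P0 : profile V A) :
  exists G : profile V (sub_of (Bk k)) -> sub_of (Bk k), forall P,
    val (G (restr_profile P (Bk k))) \in F P /\ c (val (G (restr_profile P (Bk k)))) = k.
Proof.
exists (fun Q => insubd d (odflt (val d)
  [pick x in F (epsilon (inhabits P0) (fun P => restr_profile P (Bk k) = Q)) | c x == k])).
move=> P.
have eS := epsilon_spec (inhabits P0)
  (fun Q => restr_profile Q (Bk k) = restr_profile P (Bk k)) (ex_intro _ P erefl).
move: eS; set Ps := epsilon _ _ => eS.
have agree : forall j x y, c x = k -> c y = k -> Ps j x y = P j x y.
  move=> j x y cx cy.
  have hx : x \in Bk k by rewrite inE cx.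
  have hy : y \in Bk k by rewrite inE cy.
  exact: (congr1 (fun Q : profile V (sub_of (Bk k)) =>
      (Q j : rel _) (exist _ x hx) (exist _ y hy)) eS).
case: pickP => [x /andP[hx /eqP cx]|none]; last first.
  have [y hy cy] := exists_col k Ps.
  by move: (none y); rewrite hy cy eqxx.
rewrite /= insubdK ?inE ?cx //.
split => //.
have [y hy cy] := exists_col k P.
rewrite (propag (s := enum V) (P := Ps) (P' := P) _ _ hx cx hy cy) //.
by move=> j; rewrite mem_enum.
Qed.

End Main.

Theorem corollary27 (V A : finType) (F : profile V A -> {set A}) :
  0 < #|V| -> consular F -> SPP F -> SPO F ->
  (reducible F <-> bipartite (range_edge F)).
Proof.
move=> _ Fc Fpp Fpo; split.
- case=> B [C [BC dBC [G [H hF]]]].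
  exists (fun x => x \in B) => W [P <-] x y.
  have gB := valP (G (restr_profile P B)).
  have hC := valP (H (restr_profile P C)).
  have hnB := disjointFl dBC hC.
  rewrite hF !inE => /orP[]/eqP-> /orP[]/eqP->; rewrite ?eqxx //= gB hnB //.
- case=> col bipc.
  have bip : forall P x y, x \in F P -> y \in F P -> x != y -> col x != col y.
    by move=> P x y hx hy; apply: (bipc (F P)) => //; exists P.
  have hsA : forall x : A, x \in enum A by move=> x; rewrite mem_enum.
  pose P0 := fun _ : V => rank_lo hsA.
  have [b0 hb0 cb0] := @exists_col V A F Fc col bip true P0.
  have [c0 hc0 cc0] := @exists_col V A F Fc col bip false P0.
  have db : b0 \in Bk col true by rewrite inE cb0.
  have dc : c0 \in Bk col false by rewrite inE cc0.
  have [G hG] := main_k Fc Fpo Fpp bip (exist _ b0 db) P0.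
  have [H hH] := main_k Fc Fpo Fpp bip (exist _ c0 dc) P0.
  exists (Bk col true), (Bk col false); split.
  + by apply/setP => x; rewrite !inE; case: (col x).
  + rewrite -setI_eq0; apply/eqP/setP => x; rewrite !inE.
    by case: (col x).
  + exists G, H => P.
    have [g1 g2] := hG P; have [h1 h2] := hH P.
    apply: set2_eq => //; apply/eqP => e; move: g2; rewrite e h2.
    by [].
Qed.
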